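(* Let $x$ be a dyadic rational with $x\ge 0$. Then there exists a tower $T$ with $T=x$ such that every story $S$ of $T$ satisfies $S\ge 0$.
   Context: Games are short normal-play combinatorial games with the usual disjunctive sum $+$ and order/equality of values. Canonical integers: $0\cong\{\mid\}$, $n\cong\{n-1\mid\}$ for $n>0$, $n\cong\{\mid n+1\}$ for $n<0$. The ordinal sum is $G\mathbin{:}H\cong\{L(G),\,G\mathbin{:}L(H)\mid R(G),\,G\mathbin{:}R(H)\}$ (it is associative), and $\bigodot_{i=1}^n G_i$ denotes $G_1\mathbin{:}G_2\mathbin{:}\cdots\mathbin{:}G_n$. A tower is a game $T=\bigodot_{i=1}^n(b_i+r_i)$ where each $b_i$ is a non-negative integer in canonical form and each $r_i$ is a non-positive integer in canonical form; each $b_i+r_i$ is called a story of $T$. *)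

(* Defs.v *)
From mathcomp Require Import all_boot.
Set Implicit Arguments. Unset Strict Implicit. Unset Printing Implicit Defensive.

Inductive game : Type := Game of seq game & seq game.

Definition lefts (G : game) : seq game := let: Game l _ := G in l.
Definition rights (G : game) : seq game := let: Game _ r := G in r.

Fixpoint gsize (G : game) : nat :=
  let: Game l r := G in (sumn (map gsize l) + sumn (map gsize r)).+1.

(* Standard order: G <= H iff no G^L with H <= G^L and no H^R with H^R <= G.
   Implemented with fuel; the fuel gsize G + gsize H is always sufficient. *)
Fixpoint leb_fuel (n : nat) (G H : game) : bool :=
  match n with
  | 0 => true
  | n.+1 => all (fun gl => ~~ leb_fuel n H gl) (lefts G)
            && all (fun hr => ~~ leb_fuel n hr G) (rights H)
  end.

Definition game_le (G H : game) : bool := leb_fuel (gsize G + gsize H) G H.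

Definition game_eq (G H : game) : Prop := game_le G H /\ game_le H G.

Fixpoint game_add (G : game) : game -> game :=
  let: Game gl gr := G in
  fix addH (H : game) : game :=
    let: Game hl hr := H in
    Game (map (fun g => game_add g H) gl ++ map addH hl)
         (map (fun g => game_add g H) gr ++ map addH hr).

Fixpoint ord_sum (G H : game) : game :=
  let: Game hl hr := H in
  Game (lefts G ++ map (ord_sum G) hl) (rights G ++ map (ord_sum G) hr).

Definition game0 : game := Game [::] [::].

Fixpoint nat_game (n : nat) : game :=
  match n with 0 => game0 | n.+1 => Game [:: nat_game n] [::] end.

Fixpoint negnat_game (n : nat) : game :=
  match n with 0 => game0 | n.+1 => Game [::] [:: negnat_game n] end.

(* A story b + r, with b = nat_game s.1 >= 0 and r = negnat_game s.2 <= 0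
   (i.e. r is the canonical integer -s.2). *)
Definition story (s : nat * nat) : game := game_add (nat_game s.1) (negnat_game s.2).

(* The tower with stories s0, s1, ..., sn (n+1 >= 1 stories, bottom first):
   story s0 : story s1 : ... : story sn (ordinal sum is associative). *)
Fixpoint tower_aux (s0 : nat * nat) (ss : seq (nat * nat)) : game :=
  match ss with
  | [::] => story s0
  | s1 :: ss' => ord_sum (story s0) (tower_aux s1 ss')
  end.

(* Canonical form of the non-negative dyadic rational m / 2^k. *)
Fixpoint dyadic_game (m k : nat) : game :=
  match k with
  | 0 => nat_game m
  | k'.+1 => if ~~ odd m then dyadic_game m./2 k'
             else Game [:: dyadic_game m./2 k'] [:: dyadic_game m./2.+1 k']
  end.

(* Main.v *)
Require Import Defs.
From mathcomp Require Import all_boot.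
From Stdlib Require List.
From mathcomp Require Import zify.
From Stdlib Require Import Lia.
Set Implicit Arguments. Unset Strict Implicit. Unset Printing Implicit Defensive.

Lemma In_cat {T} (x : T) s1 s2 : List.In x (s1 ++ s2) <-> List.In x s1 \/ List.In x s2.
Proof. elim: s1 => [|y s IH] /=; [tauto| rewrite IH; tauto]. Qed.

Lemma In_map {T U} (f : T -> U) y s :
  List.In y (map f s) <-> exists x, List.In x s /\ y = f x.
Proof.
elim: s y => [|x s IH] y /=; first by split=> [[]|[? []]].
split.
  case=> [<-|H]; first by exists x; auto.
  by case: (proj1 (IH y) H) => z [Hz ->]; exists z; auto.
case=> z [[<-|Hz] ->]; first by left.
by right; apply/IH; exists z.
Qed.

Lemma allIn {T} (p : pred T) s : all p s <-> forall x, List.In x s -> p x.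
Proof.
elim: s => [|y s IH] //=; split.
  by move/andP=> [Hy /IH Hs] x [<-|Hx]; auto.
by move=> H; apply/andP; split; [apply: H; left | apply/IH => x Hx; apply: H; right].
Qed.

Lemma all_ext {T} (p q : pred T) s :
  (forall x, List.In x s -> p x = q x) -> all p s = all q s.
Proof.
elim: s => [|y s IH] //= H; rewrite H; last by left.
by rewrite IH // => x Hx; apply: H; right.
Qed.

Lemma map_ext_In {T U} (f g : T -> U) s :
  (forall x, List.In x s -> f x = g x) -> map f s = map g s.
Proof.
elim: s => [|y s IH] //= H; rewrite H; last by left.
by rewrite IH // => x Hx; apply: H; right.
Qed.

Lemma gsize_gt0 G : 0 < gsize G. Proof. by case: G. Qed.

Lemma In_sumn g l : List.In g l -> gsize g <= sumn (map gsize l).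
Proof.
elim: l => [|x l IH] //= [<-|H]; first by apply: leq_addr.
by apply: leq_trans (IH H) _; apply: leq_addl.
Qed.

Lemma left_lt G g : List.In g (lefts G) -> gsize g < gsize G.
Proof. case: G => l r /= H; rewrite ltnS; apply: leq_trans (In_sumn H) _; apply: leq_addr. Qed.

Lemma right_lt G g : List.In g (rights G) -> gsize g < gsize G.
Proof. case: G => l r /= H; rewrite ltnS; apply: leq_trans (In_sumn H) _; apply: leq_addl. Qed.

Lemma fuel_step n G H : gsize G + gsize H <= n -> leb_fuel n G H = leb_fuel n.+1 G H.
Proof.
elim: n G H => [|n IH] G H Hs.
  by move: Hs; have := gsize_gt0 G; case: (gsize G).
rewrite [LHS]/= [RHS]/=; congr (_ && _); apply: all_ext => x Hx; congr negb; apply: IH.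
  have := left_lt Hx; lia.
have := right_lt Hx; lia.
Qed.

Lemma fuel_ok n G H : gsize G + gsize H <= n -> leb_fuel n G H = game_le G H.
Proof.
rewrite /game_le; elim: n => [|n IH] Hs.
  by move: Hs; have := gsize_gt0 G; case: (gsize G).
case: (ltngtP (gsize G + gsize H) n.+1) Hs => // [h _|-> _ //].
by rewrite -fuel_step ?IH.
Qed.

Lemma game_le_unfold G H : game_le G H =
  all (fun gl => ~~ game_le H gl) (lefts G) && all (fun hr => ~~ game_le hr G) (rights H).
Proof.
have h0 := gsize_gt0 G.
rewrite /game_le; move E: (gsize G + gsize H) => s.
case: s E => [|s] E; first by move: E h0; case: (gsize G).
rewrite [LHS]/=; congr (_ && _); apply: all_ext => x Hx; congr negb; apply: fuel_ok.
  have := left_lt Hx; lia.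
have := right_lt Hx; lia.
Qed.

Lemma gle_refl G : game_le G G.
Proof.
move: {2}(gsize G) (leqnn (gsize G)) => n; elim: n G => [|n IH] G Hs.
  by move: Hs; have := gsize_gt0 G; case: (gsize G).
rewrite game_le_unfold; apply/andP; split; apply/allIn => x Hx; apply/negP => H;
  rewrite game_le_unfold in H; case/andP: H => H1 H2.
  move/allIn: H1 => /(_ x Hx); rewrite IH //; have := left_lt Hx; lia.
move/allIn: H2 => /(_ x Hx); rewrite IH //; have := right_lt Hx; lia.
Qed.

Lemma le_left_opt G g : List.In g (lefts G) -> ~~ game_le G g.
Proof. by move=> Hg; have := gle_refl G; rewrite game_le_unfold => /andP [/allIn /(_ g Hg) ]. Qed.

Lemma le_right_opt G g : List.In g (rights G) -> ~~ game_le g G.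
Proof. by move=> Hg; have := gle_refl G; rewrite game_le_unfold => /andP [_ /allIn /(_ g Hg) ]. Qed.

Lemma gle_trans G H K : game_le G H -> game_le H K -> game_le G K.
Proof.
move: {2}(gsize G + gsize H + gsize K) (leqnn (gsize G + gsize H + gsize K)) => n.
elim: n G H K => [|n IH] G H K Hs.
  by move: Hs; have := gsize_gt0 G; case: (gsize G).
move=> GH HK; rewrite game_le_unfold; apply/andP; split; apply/allIn => x Hx; apply/negP => Hle.
  have: game_le H x.
    apply: (IH H K x) => //; have := left_lt Hx; lia.
  by move: GH; rewrite game_le_unfold => /andP [/allIn /(_ x Hx) /negP].
have: game_le x H.
  apply: (IH x G H) => //; have := right_lt Hx; lia.
by move: HK; rewrite game_le_unfold => /andP [_ /allIn /(_ x Hx) /negP].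
Qed.

Lemma nle_left G g : List.In g (lefts G) -> game_le G g -> False.
Proof. by move=> H1 H2; move: (le_left_opt H1); rewrite H2. Qed.
Lemma nle_right G g : List.In g (rights G) -> game_le g G -> False.
Proof. by move=> H1 H2; move: (le_right_opt H1); rewrite H2. Qed.

Lemma lefts_os G A : lefts (ord_sum G A) = lefts G ++ map (ord_sum G) (lefts A).
Proof. by case: A. Qed.
Lemma rights_os G A : rights (ord_sum G A) = rights G ++ map (ord_sum G) (rights A).
Proof. by case: A. Qed.

Lemma os_mono G A B :
  (game_le A B -> game_le (ord_sum G A) (ord_sum G B)) /\
  (game_le (ord_sum G A) (ord_sum G B) -> game_le A B).
Proof.
move: {2}(gsize A + gsize B) (leqnn (gsize A + gsize B)) => n.
elim: n A B => [|n IH] A B Hs.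
  by move: Hs; have := gsize_gt0 A; case: (gsize A).
split.
  move=> AB; rewrite game_le_unfold lefts_os rights_os; apply/andP; split;
    apply/allIn => x /In_cat [Hx|/In_map [y [Hy ->]]]; apply/negP => Hle.
  - by apply: (nle_left (G := ord_sum G B) _ Hle); rewrite lefts_os; apply/In_cat; left.
  - have h1 : game_le B y by apply: (proj2 (IH B y _)) => //; have := left_lt Hy; lia.
    by apply: (nle_left Hy (gle_trans AB h1)).
  - by apply: (nle_right (G := ord_sum G A) _ Hle); rewrite rights_os; apply/In_cat; left.
  - have h1 : game_le y A by apply: (proj2 (IH y A _)) => //; have := right_lt Hy; lia.
    by apply: (nle_right Hy (gle_trans h1 AB)).
move=> H; rewrite game_le_unfold; apply/andP; split; apply/allIn => x Hx; apply/negP => Hle.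
  have h1 := proj1 (IH B x ltac:(have := left_lt Hx; lia)) Hle.
  apply: (nle_left _ (gle_trans H h1)); rewrite lefts_os; apply/In_cat; right.
  by apply/In_map; exists x.
have h1 := proj1 (IH x A ltac:(have := right_lt Hx; lia)) Hle.
apply: (nle_right _ (gle_trans h1 H)); rewrite rights_os; apply/In_cat; right.
by apply/In_map; exists x.
Qed.

Lemma geq_refl G : game_eq G G. Proof. by split; apply: gle_refl. Qed.
Lemma geq_sym G H : game_eq G H -> game_eq H G. Proof. by case. Qed.
Lemma geq_trans G H K : game_eq G H -> game_eq H K -> game_eq G K.
Proof. by case=> [a b] [c d]; split; [apply: gle_trans a c | apply: gle_trans d b]. Qed.
Lemma geq_os G A B : game_eq A B -> game_eq (ord_sum G A) (ord_sum G B).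
Proof. by case=> [a b]; split; apply: (proj1 (os_mono _ _ _)). Qed.

Lemma os_0 G : ord_sum G game0 = G.
Proof. by case: G => l r /=; rewrite !cats0. Qed.

Lemma os_assoc A B C : ord_sum A (ord_sum B C) = ord_sum (ord_sum A B) C.
Proof.
move: {2}(gsize C) (leqnn (gsize C)) => n.
elim: n C => [|n IH] C Hs.
  by move: Hs; have := gsize_gt0 C; case: (gsize C).
case: C Hs => lc rc Hs.
rewrite [ord_sum B _]/= [ord_sum (ord_sum A B) _]/= [ord_sum A _]/= lefts_os rights_os.
rewrite !map_cat !catA -!map_comp; congr (Game (_ ++ _) (_ ++ _)); apply: map_ext_In => x Hx /=; apply: IH.
  by have := left_lt (G := Game lc rc) Hx; lia.
by have := right_lt (G := Game lc rc) Hx; lia.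
Qed.

Lemma tower_cat s0 ss s ss' :
  tower_aux s0 (ss ++ s :: ss') = ord_sum (tower_aux s0 ss) (tower_aux s ss').
Proof.
elim: ss s0 => [|s1 ss IH] s0 //=.
by rewrite IH os_assoc.
Qed.

From mathcomp Require Import all_order all_algebra.
From mathcomp Require Import ring lra.
From Stdlib Require Import Classical.
Import GRing.Theory Num.Theory Order.TTheory.
Local Open Scope ring_scope.

Definition dy (N : int) (e : nat) : rat := N%:~R / (2 ^ e)%:R.

Lemma p2_gt0 e : 0 < ((2 ^ e)%:R : rat).
Proof. by rewrite ltr0n expn_gt0. Qed.
Lemma p2_neq0 e : ((2 ^ e)%:R : rat) != 0.
Proof. by rewrite gt_eqF // p2_gt0. Qed.

Lemma dy_lt N M e : (dy N e < dy M e) = (N < M).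
Proof. by rewrite /dy ltr_pM2r ?invr_gt0 ?p2_gt0 // ltr_int. Qed.
Lemma dy_le N M e : (dy N e <= dy M e) = (N <= M).
Proof. by rewrite /dy ler_pM2r ?invr_gt0 ?p2_gt0 // ler_int. Qed.

Lemma dy_shift N e d : dy N e = dy (N * (2 ^ d)%N%:Z) (e + d).
Proof.
rewrite /dy intrM expnD natrM /=.
have h1 := p2_neq0 e; have h2 := p2_neq0 d.
rewrite -[((2 ^ d)%N%:Z)%:~R]/(((2 ^ d)%N%:R : rat)).
field. by rewrite h1 h2.
Qed.

Definition isInt (x : rat) : Prop := exists z : int, x = z%:~R.

Definition simpler (x y : rat) : Prop :=
  (exists k : nat, isInt (x * (2 ^ k)%:R) /\ ~ isInt (y * (2 ^ k)%:R)) \/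
  (isInt x /\ isInt y /\ `|x| < `|y|).

Lemma isInt_mul x k : isInt x -> isInt (x * (2 ^ k)%:R).
Proof. by case=> z ->; exists (z * (2 ^ k)%N%:Z); rewrite intrM. Qed.

Lemma isInt_up x k l : (k <= l)%N -> isInt (x * (2 ^ k)%:R) -> isInt (x * (2 ^ l)%:R).
Proof.
move=> kl /(isInt_mul (l - k)); rewrite -mulrA -natrM -expnD subnKC //.
Qed.

Lemma simpler_asym x y : simpler x y -> simpler y x -> False.
Proof.
case=> [[k [Hxk Hyk]]|[Hx [Hy Hxy]]] [[l [Hyl Hxl]]|[Hy' [Hx' Hyx]]].
- case: (leqP k l) => kl.
    by apply: Hxl; apply: isInt_up Hxk.
  by apply: Hyk; apply: isInt_up Hyl; apply: ltnW.
- by apply: Hyk; rewrite -(expn0 2) ; apply: (isInt_up (leq0n k)); rewrite expn0 mulr1.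
- by apply: Hxl; apply: (isInt_up (leq0n l)); rewrite expn0 mulr1.
- by move: (lt_trans Hxy Hyx); rewrite ltxx.
Qed.

Lemma simp_dy (N : int) e z : dy (N - 1) e < z -> z < dy (N + 1) e ->
  z = dy N e \/ simpler (dy N e) z.
Proof.
move=> h1 h2.
case: (classic (isInt (z * (2 ^ e)%:R))) => [[M HM]|HnI].
  have Hz : z = dy M e by rewrite /dy -HM mulfK // p2_neq0.
  rewrite Hz !dy_lt in h1 h2 *; left; congr dy; lia.
right; left; exists e; split => //.
by exists N; rewrite /dy mulfVK // p2_neq0.
Qed.

Lemma simp_int (N : int) z : (0 < N -> (N - 1)%:~R < z) -> (N < 0 -> z < (N + 1)%:~R) ->
  z = N%:~R \/ simpler N%:~R z.
Proof.
move=> h1 h2.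
case: (classic (isInt z)) => [[M HM]|HnI].
  rewrite HM in h1 h2 *.
  case: (eqVneq M N) => [->|MN]; first by left.
  right; right; split; first by exists N.
  split; first by exists M.
  suff H : `|N| < `|M| by move: H; rewrite -(ltr_int rat) !intr_norm.
  case: (ltrgt0P N) => HN.
  - have := h1 HN; rewrite ltr_int => h; rewrite !gtr0_norm //; lia.
  - have := h2 HN; rewrite ltr_int => h; rewrite !ltr0_norm //; lia.
  - by rewrite normr_gt0 -HN.
right; left; exists 0%N; split; last by rewrite expn0 mulr1.
by exists N; rewrite expn0 mulr1.
Qed.

Inductive Num : game -> rat -> Prop :=
| NumI (l r : seq game) (vl vr : seq rat) (x : rat) :
    List.Forall2 Num l vl -> List.Forall2 Num r vr ->
    (forall v, v \in vl -> v < x) -> (forall v, v \in vr -> x < v) ->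
    (forall z, (forall v, v \in vl -> v < z) -> (forall v, v \in vr -> z < v) ->
       z = x \/ simpler x z) ->
    Num (Game l r) x.

Lemma F2_l (R : game -> rat -> Prop) l vl g :
  List.Forall2 R l vl -> List.In g l -> exists v, v \in vl /\ R g v.
Proof.
elim=> [|g1 v1 l1 vl1 H1 _ IH] //= [<-|Hg].
  by exists v1; rewrite inE eqxx.
by case: (IH Hg) => v [Hv Rv]; exists v; rewrite inE Hv orbT.
Qed.

Lemma F2_r (R : game -> rat -> Prop) l vl v :
  List.Forall2 R l vl -> v \in vl -> exists g, List.In g l /\ R g v.
Proof.
elim=> [|g1 v1 l1 vl1 H1 _ IH] //=; rewrite inE => /orP [/eqP ->|Hv].
  by exists g1; split; [left|].
by case: (IH Hv) => g [Hg Rg]; exists g; split; [right|].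
Qed.

Lemma F2_ex (R : game -> rat -> Prop) l :
  (forall g, List.In g l -> exists v, R g v) -> exists vl, List.Forall2 R l vl.
Proof.
elim: l => [|g l IH] H; first by exists [::].
case: (H g (or_introl erefl)) => v Hv.
case: IH => [g' Hg'|vl Hvl]; first by apply: H; right.
by exists (v :: vl); constructor.
Qed.

Lemma NumE G x : Num G x -> exists vl vr,
    [/\ List.Forall2 Num (lefts G) vl, List.Forall2 Num (rights G) vr,
    (forall v, v \in vl -> v < x), (forall v, v \in vr -> x < v) &
    (forall z, (forall v, v \in vl -> v < z) -> (forall v, v \in vr -> z < v) ->
       z = x \/ simpler x z)].
Proof. by case=> l r vl vr x' H1 H2 H3 H4 H5; exists vl, vr. Qed.

Theorem num_le G H x y : Num G x -> Num H y -> game_le G H <-> x <= y.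
Proof.
move: {2}(gsize G + gsize H)%N (leqnn (gsize G + gsize H)%N) => n.
elim: n G H x y => [|n IH] G H x y Hs NG NH.
  by move: Hs; have := gsize_gt0 G; case: (gsize G).
case: (NumE NG) => vlG [vrG [FLG FRG LG RG SG]].
case: (NumE NH) => vlH [vrH [FLH FRH LH RH SH]].
rewrite game_le_unfold; split.
  case/andP => HL HR; rewrite leNgt; apply/negP => Hyx.
  have A1 : forall v, v \in vlG -> v < y.
    move=> v Hv; case: (F2_r FLG Hv) => g [Hg Ng].
    move/allIn: HL => /(_ g Hg) /negP Hn.
    rewrite ltNge; apply/negP => Hle; apply: Hn.
    by apply/(IH H g y v _ NH Ng) => //; have := left_lt Hg; lia.
  have A2 : forall v, v \in vrH -> x < v.
    move=> v Hv; case: (F2_r FRH Hv) => g [Hg Ng].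
    move/allIn: HR => /(_ g Hg) /negP Hn.
    rewrite ltNge; apply/negP => Hle; apply: Hn.
    by apply/(IH g G v x _ Ng NG) => //; have := right_lt Hg; lia.
  case: (SG y A1 (fun v Hv => lt_trans Hyx (RG v Hv))) => [Eyx|Sxy].
    by move: Hyx; rewrite Eyx ltxx.
  case: (SH x (fun v Hv => lt_trans (LH v Hv) Hyx) A2) => [Exy|Syx].
    by move: Hyx; rewrite Exy ltxx.
  by apply: (simpler_asym Sxy Syx).
move=> Hxy; apply/andP; split; apply/allIn => g Hg; apply/negP => Hle.
  case: (F2_l FLG Hg) => v [Hv Ng].
  have : y <= v by apply/(IH H g y v _ NH Ng) => //; have := left_lt Hg; lia.
  by rewrite leNgt (lt_le_trans (LG v Hv) Hxy).
case: (F2_l FRH Hg) => v [Hv Ng].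
have : v <= x by apply/(IH g G v x _ Ng NG) => //; have := right_lt Hg; lia.
by rewrite leNgt (le_lt_trans Hxy (RH v Hv)).
Qed.

Lemma num_unique G x y : Num G x -> Num G y -> x = y.
Proof.
move=> h1 h2; apply/eqP; rewrite eq_le.
by have := proj1 (num_le h1 h2) (gle_refl G); have := proj1 (num_le h2 h1) (gle_refl G) => -> ->.
Qed.

Lemma num_eq G H x : Num G x -> Num H x -> game_eq G H.
Proof. by move=> h1 h2; split; [apply/(num_le h1 h2) | apply/(num_le h2 h1)]. Qed.

Lemma NumI' l r x :
  (forall g, List.In g l -> exists v, Num g v) ->
  (forall g, List.In g r -> exists v, Num g v) ->
  (forall g v, List.In g l -> Num g v -> v < x) ->
  (forall g v, List.In g r -> Num g v -> x < v) ->
  (forall z, (forall g v, List.In g l -> Num g v -> v < z) ->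
             (forall g v, List.In g r -> Num g v -> z < v) -> z = x \/ simpler x z) ->
  Num (Game l r) x.
Proof.
move=> El Er Ll Rr S.
case: (F2_ex El) => vl Fl; case: (F2_ex Er) => vr Fr.
apply: (NumI Fl Fr).
- by move=> v /(F2_r Fl) [g [Hg Ng]]; apply: Ll Ng.
- by move=> v /(F2_r Fr) [g [Hg Ng]]; apply: Rr Ng.
move=> z Hl Hr; apply: S.
  move=> g v Hg Ng; case: (F2_l Fl Hg) => v' [Hv' Ng'].
  by rewrite (num_unique Ng Ng'); apply: Hl.
move=> g v Hg Ng; case: (F2_l Fr Hg) => v' [Hv' Ng'].
by rewrite (num_unique Ng Ng'); apply: Hr.
Qed.

Lemma NumE' G x : Num G x ->
  (forall g, List.In g (lefts G) -> exists v, Num g v) /\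
  (forall g, List.In g (rights G) -> exists v, Num g v) /\
  (forall g v, List.In g (lefts G) -> Num g v -> v < x) /\
  (forall g v, List.In g (rights G) -> Num g v -> x < v).
Proof.
case/NumE => vl [vr [Fl Fr L R _]]; split; [|split; [|split]].
- by move=> g /(F2_l Fl) [v [_ Nv]]; exists v.
- by move=> g /(F2_l Fr) [v [_ Nv]]; exists v.
- by move=> g v /(F2_l Fl) [v' [Hv' Nv']] Nv; rewrite (num_unique Nv Nv'); apply: L.
- by move=> g v /(F2_l Fr) [v' [Hv' Nv']] Nv; rewrite (num_unique Nv Nv'); apply: R.
Qed.

Lemma story_eq b c : story (b, c) =
  Game (if b is b'.+1 then [:: story (b', c)] else [::])
       (if c is c'.+1 then [:: story (b, c')] else [::]).
Proof. by case: b => [|b]; case: c => [|c]. Qed.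

Lemma In1 (g h : game) : List.In g [:: h] -> g = h.
Proof. by case=> [<-|[]]. Qed.

Lemma num_story b c : Num (story (b, c)) ((b%:Z - c%:Z)%:~R).
Proof.
move: {2}(b + c)%N (leqnn (b + c)%N) => n.
elim: n b c => [|n IH] b c Hs.
  have -> : b = 0%N by lia.
  have -> : c = 0%N by lia.
  rewrite story_eq; apply: NumI' => //= z _ _.
  by apply: simp_int; rewrite ltxx.
have Hl : forall g v, List.In g (if b is b'.+1 then [:: story (b', c)] else [::]) ->
    Num g v -> v = ((b%:Z - 1 - c%:Z)%:~R).
  case: b Hs => [|b] Hs //= g v /In1 -> Nv.
  apply: (num_unique Nv); have -> : (b.+1%:Z - 1 - c%:Z) = (b%:Z - c%:Z) by lia.
  by apply: IH; lia.
have Hr : forall g v, List.In g (if c is c'.+1 then [:: story (b, c')] else [::]) ->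
    Num g v -> v = ((b%:Z - c%:Z + 1)%:~R).
  case: c Hs Hl => [|c] Hs Hl //= g v /In1 -> Nv.
  apply: (num_unique Nv); have -> : (b%:Z - c.+1%:Z + 1) = (b%:Z - c%:Z) by lia.
  by apply: IH; lia.
rewrite story_eq; apply: NumI'.
- case: b Hs Hl Hr => [|b] Hs Hl Hr //= g /In1 ->; eexists; apply: IH; lia.
- case: c Hs Hl Hr => [|c] Hs Hl Hr //= g /In1 ->; eexists; apply: IH; lia.
- by move=> g v Hg Nv; rewrite (Hl g v Hg Nv) ltr_int; lia.
- by move=> g v Hg Nv; rewrite (Hr g v Hg Nv) ltr_int; lia.
move=> z HL HR; apply: simp_int.
  move=> Hp; case: b Hs Hl Hr HL HR Hp => [|b] Hs Hl Hr HL HR Hp; first by lia.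
  have := HL (story (b, c)) _ (or_introl erefl) (IH b c ltac:(lia)).
  by have -> : (b%:Z - c%:Z) = (b.+1%:Z - c%:Z - 1) by lia.
move=> Hp; case: c Hs Hl Hr HL HR Hp => [|c] Hs Hl Hr HL HR Hp; first by lia.
have := HR (story (b, c)) _ (or_introl erefl) (IH b c ltac:(lia)).
by have -> : (b%:Z - c%:Z) = (b%:Z - c.+1%:Z + 1) by lia.
Qed.

Lemma story_nat b : story (b, 0%N) = nat_game b.
Proof. by elim: b => [|b IH] //; rewrite story_eq IH. Qed.

Lemma dy_half (M : int) k : dy M k = dy (M * 2) k.+1.
Proof. by rewrite (dy_shift M k 1) addn1. Qed.

Lemma half_eq m : (m = m./2 * 2 + odd m)%N.
Proof. by rewrite -{1}(odd_double_half m) -muln2 addnC. Qed.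

Lemma num_dy m k : Num (dyadic_game m k) (dy m%:Z k).
Proof.
elim: k m => [|k IH] m.
  rewrite /= -story_nat /dy expn0 divr1.
  by have := num_story m 0; rewrite subr0.
rewrite /=; have Hm := half_eq m.
case: (odd m) Hm => /= Hm.
  apply: NumI' => /=.
  - by move=> g /In1 ->; eexists; apply: IH.
  - by move=> g /In1 ->; eexists; apply: IH.
  - move=> g v /In1 -> Nv; rewrite (num_unique Nv (IH _)) dy_half dy_lt; lia.
  - move=> g v /In1 -> Nv; rewrite (num_unique Nv (IH _)) [in X in _ < X]dy_half dy_lt; lia.
  move=> z HL HR; apply: simp_dy.
    have := HL _ _ (or_introl erefl) (IH m./2); rewrite dy_half.
    by have -> : (m./2%:Z * 2) = (m%:Z - 1) by lia.
  have := HR _ _ (or_introl erefl) (IH m./2.+1); rewrite dy_half.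
  by have -> : (m./2.+1%:Z * 2) = (m%:Z + 1) by lia.
rewrite addn0 in Hm.
have -> : dy m%:Z k.+1 = dy m./2%:Z k.
  rewrite [RHS]dy_half; congr dy; lia.
exact: IH.
Qed.

Lemma dy_ltS N e M d : N * (2 ^ d)%N%:Z < M -> dy N e < dy M (e + d).
Proof. by move=> h; rewrite (dy_shift N e d) dy_lt. Qed.
Lemma dy_leS N e M d : N * (2 ^ d)%N%:Z <= M -> dy N e <= dy M (e + d).
Proof. by move=> h; rewrite (dy_shift N e d) dy_le. Qed.
Lemma dy_gtS N e M d : M < N * (2 ^ d)%N%:Z -> dy M (e + d) < dy N e.
Proof. by move=> h; rewrite (dy_shift N e d) dy_lt. Qed.
Lemma dy_geS N e M d : M <= N * (2 ^ d)%N%:Z -> dy M (e + d) <= dy N e.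
Proof. by move=> h; rewrite (dy_shift N e d) dy_le. Qed.
Lemma dy_eqS N e M d : N * (2 ^ d)%N%:Z = M -> dy N e = dy M (e + d).
Proof. by move=> h; rewrite (dy_shift N e d) h. Qed.

Definition Inv Q (A p : nat) :=
  [/\ Num Q (dy A%:Z p),
      (forall g v, List.In g (lefts Q) -> Num g v -> v <= dy (A%:Z - 1) p),
      (forall g v, List.In g (rights Q) -> Num g v -> dy (A%:Z + 1) p <= v) &
      exists g, List.In g (rights Q) /\ Num g (dy (A%:Z + 1) p)].

Lemma In_last (x : game) s : List.In x (s ++ [:: x]).
Proof. by apply/In_cat; right; left. Qed.

Lemma os_1 Q : ord_sum Q (nat_game 1) = Game (lefts Q ++ [:: Q]) (rights Q).
Proof. by case: Q => l r /=; rewrite !cats0. Qed.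
Lemma os_2 Q a b : ord_sum Q (Game [:: a] [:: b]) =
  Game (lefts Q ++ [:: ord_sum Q a]) (rights Q ++ [:: ord_sum Q b]).
Proof. by []. Qed.

Lemma GL Q A p : Inv Q A p -> forall k m, (m <= 2 ^ k)%N ->
  Num (ord_sum Q (dyadic_game m k)) (dy (A%:Z * (2 ^ k.+1)%N%:Z + m%:Z) (p + k.+1)).
Proof.
case=> NQ QL QR [g0 [Hg0 Ng0]].
case: (NumE' NQ) => EL [ER [LL RR]].
elim=> [|k IH] m Hm.
  rewrite expn0 in Hm.
  case: m Hm => [|[|m]] Hm //.
    rewrite [dyadic_game _ _]/= -/game0 os_0.
    have <- : dy A%:Z p = dy (A%:Z * (2 ^ 1)%N%:Z + 0%N%:Z) (p + 1).
      by apply: dy_eqS; lia.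
    exact: NQ.
  rewrite [dyadic_game _ _]/= -[Game [:: game0] [::]]/(nat_game 1) os_1; apply: NumI'.
  - by move=> g /In_cat [/EL //|/In1 ->]; exists (dy A p).
  - by [].
  - move=> g v /In_cat [Hg Nv|/In1 -> Nv].
      apply: le_lt_trans (QL _ _ Hg Nv) _; apply: dy_ltS; rewrite expn1; lia.
    rewrite (num_unique Nv NQ); apply: dy_ltS; rewrite expn1; lia.
  - move=> g v Hg Nv; apply: lt_le_trans (QR _ _ Hg Nv); apply: dy_gtS; rewrite expn1; lia.
  move=> z HL HR; apply: simp_dy.
    have := HL Q _ (In_last _ _) NQ.
    by have -> : dy A p = dy (A%:Z * (2 ^ 1)%N%:Z + 1%N%:Z - 1) (p + 1) by apply: dy_eqS; rewrite expn1; lia.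
  have := HR g0 _ Hg0 Ng0.
  by have -> : dy (A%:Z + 1) p = dy (A%:Z * (2 ^ 1)%N%:Z + 1%N%:Z + 1) (p + 1) by apply: dy_eqS; rewrite expn1; lia.
have Hm' := half_eq m.
rewrite [dyadic_game _ _]/=.
case: (odd m) Hm' => /= Hm'; last first.
  rewrite addn0 in Hm'.
  have -> : dy (A%:Z * (2 ^ k.+2)%N%:Z + m%:Z) (p + k.+2) =
            dy (A%:Z * (2 ^ k.+1)%N%:Z + m./2%:Z) (p + k.+1).
    symmetry; rewrite (_ : (p + k.+2 = (p + k.+1) + 1)%N); last by lia.
    apply: dy_eqS; rewrite !expnS expn0; lia.
  by apply: IH; move: Hm; rewrite expnS; lia.
have Hh : (m./2.+1 <= 2 ^ k)%N by move: Hm; rewrite expnS; lia.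
have Hh' : (m./2 <= 2 ^ k)%N by lia.
have NL := IH _ Hh'; have NR := IH _ Hh.
apply: NumI'.
- by move=> g /In_cat [/EL //|/In1 ->]; eexists; apply: NL.
- by move=> g /In_cat [/ER //|/In1 ->]; eexists; apply: NR.
- move=> g v /In_cat [Hg Nv|/In1 -> Nv].
    apply: le_lt_trans (QL _ _ Hg Nv) _; apply: dy_ltS.
    rewrite !expnS; lia.
  rewrite (num_unique Nv NL) (_ : (p + k.+2 = (p + k.+1) + 1)%N); last by lia.
  apply: dy_ltS.
  rewrite !expnS expn0; lia.
- move=> g v /In_cat [Hg Nv|/In1 -> Nv].
    apply: lt_le_trans (QR _ _ Hg Nv); apply: dy_gtS.
    move: Hm; rewrite !expnS; lia.
  rewrite (num_unique Nv NR) (_ : (p + k.+2 = (p + k.+1) + 1)%N); last by lia.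
  apply: dy_gtS.
  rewrite !expnS expn0; lia.
move=> z HL HR; apply: simp_dy.
  have := HL _ _ (In_last _ _) NL.
  have -> : dy (A%:Z * (2 ^ k.+1)%N%:Z + m./2%:Z) (p + k.+1) =
            dy (A%:Z * (2 ^ k.+2)%N%:Z + m%:Z - 1) (p + k.+2).
    rewrite (_ : (p + k.+2 = (p + k.+1) + 1)%N); last by lia.
  apply: dy_eqS; rewrite !expnS expn0; lia.
  done.
have := HR _ _ (In_last _ _) NR.
have -> : dy (A%:Z * (2 ^ k.+1)%N%:Z + m./2.+1%:Z) (p + k.+1) =
          dy (A%:Z * (2 ^ k.+2)%N%:Z + m%:Z + 1) (p + k.+2).
  rewrite (_ : (p + k.+2 = (p + k.+1) + 1)%N); last by lia.
  apply: dy_eqS; rewrite !expnS expn0; lia.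
done.
Qed.

Lemma dy0 N : dy N 0 = N%:~R.
Proof. by rewrite /dy expn0 divr1. Qed.

Lemma Inv_step Q A p : Inv Q A p -> Inv (ord_sum Q (nat_game 1)) (2 * A + 1)%N p.+1.
Proof.
move=> HI; have NG := GL HI (k := 0) (m := 1) isT.
case: HI => NQ QL QR [g0 [Hg0 Ng0]].
rewrite os_1; split => /=.
- rewrite -os_1; move: NG; congr Num; rewrite addn1; congr dy; rewrite expn1; lia.
- move=> g v /In_cat [Hg Nv|/In1 -> Nv].
    apply: le_trans (QL _ _ Hg Nv) _; rewrite -(addn1 p); apply: dy_leS; rewrite expn1; lia.
  rewrite (num_unique Nv NQ) -(addn1 p); apply: dy_leS; rewrite expn1; lia.
- move=> g v Hg Nv; apply: le_trans (QR _ _ Hg Nv); rewrite -(addn1 p); apply: dy_geS; rewrite expn1; lia.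
exists g0; split => //; move: Ng0; congr Num; rewrite -(addn1 p); apply: dy_eqS; rewrite expn1; lia.
Qed.

Lemma Inv_base n : Inv (story (n.+1, 1%N)) n 0.
Proof.
split.
- rewrite dy0; move: (num_story n.+1 1); congr Num; congr intmul; lia.
- rewrite story_eq => g v /In1 -> Nv; rewrite (num_unique Nv (num_story n 1)) dy0; rewrite ler_int; lia.
- rewrite story_eq => g v /In1 -> Nv; rewrite (num_unique Nv (num_story n.+1 0)) dy0; rewrite ler_int; lia.
exists (story (n.+1, 0%N)); split; first by rewrite story_eq; left.
by rewrite dy0; move: (num_story n.+1 0); congr Num; congr intmul; lia.
Qed.

Lemma nonneg b c : (c <= b)%N -> game_le game0 (story (b, c)).
Proof.
move=> h; apply/(num_le (num_story 0 0) (num_story b c)).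
by rewrite ler_int; lia.
Qed.

Definition Pt (k m : nat) := exists s0 ss,
  game_eq (tower_aux s0 ss) (dyadic_game m k) /\
  (forall s, s \in s0 :: ss -> game_le game0 (story s)).

Lemma Ext k (IHk : forall k', (k' < k)%N -> forall m, Pt k' m) :
  forall d Q A p X, (p + d.+1 = k)%N -> Inv Q A p ->
  (A * 2 ^ d.+1 <= X < (A + 1) * 2 ^ d.+1)%N ->
  exists s0 ss, game_eq (ord_sum Q (tower_aux s0 ss)) (dyadic_game X k) /\
  (forall s, s \in s0 :: ss -> game_le game0 (story s)).
Proof.
have case1 : forall d Q A p X, (p + d.+1 = k)%N -> Inv Q A p ->
  (A * 2 ^ d.+1 <= X <= A * 2 ^ d.+1 + 2 ^ d)%N ->
  exists s0 ss, game_eq (ord_sum Q (tower_aux s0 ss)) (dyadic_game X k) /\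
  (forall s, s \in s0 :: ss -> game_le game0 (story s)).
  move=> d Q A p X Hk HI HX.
  have Hm : (X - A * 2 ^ d.+1 <= 2 ^ d)%N by lia.
  case: (IHk d ltac:(lia) (X - A * 2 ^ d.+1)%N) => s0 [ss [E Hn]].
  exists s0, ss; split => //.
  apply: geq_trans (geq_os Q E) _.
  apply: num_eq (GL HI Hm) _.
  rewrite Hk; move: (num_dy X k); congr Num; congr dy; lia.
elim=> [|d IHd] Q A p X Hk HI HX.
  case: (leqP X (A * 2 ^ 1 + 2 ^ 0)) => Hc; first by apply: (case1 0%N Q A p X Hk HI); rewrite expn0 in Hc *; lia.
  by move: HX Hc; rewrite expn1 expn0; lia.
case: (leqP X (A * 2 ^ d.+2 + 2 ^ d.+1)) => Hc; first by apply: (case1 d.+1 Q A p X Hk HI); lia.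
case: (IHd (ord_sum Q (nat_game 1)) (2 * A + 1)%N p.+1 X _ (Inv_step HI) _).
- by lia.
- by move: HX Hc; rewrite !expnS; lia.
move=> s0 [ss [E Hn]].
exists (1%N, 0%N), (s0 :: ss); split.
  by rewrite [tower_aux _ _]/= story_nat os_assoc.
move=> s; rewrite inE => /orP [/eqP ->|Hs]; first by apply: nonneg.
by apply: Hn.
Qed.

Lemma main_P k m : Pt k m.
Proof.
elim/ltn_ind: k m => k IHk m.
have Hdm := divn_eq m (2 ^ k).
have Hr : (m %% 2 ^ k < 2 ^ k)%N by rewrite ltn_pmod // expn_gt0.
case: (eqVneq (m %% 2 ^ k)%N 0%N) => Hr0.
  exists (m %/ 2 ^ k, 0%N)%N, [::]; split.
    apply: num_eq (num_story _ _) _.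
    move: (num_dy m k); congr Num.
    rewrite -[k]add0n -(dy_eqS (N := (m %/ 2 ^ k)%N%:Z)) ?dy0; last by lia.
    congr intmul; lia.
  by move=> s; rewrite inE => /eqP ->; apply: nonneg.
case: k IHk Hdm Hr Hr0 => [|d] IHk Hdm Hr Hr0.
  by move: Hr0; rewrite expn0 modn1 eqxx.
case: (Ext IHk (d := d) (Q := story ((m %/ 2 ^ d.+1).+1, 1%N)) (A := (m %/ 2 ^ d.+1)%N) (p := 0%N) (X := m) _ (Inv_base _) _).
- by rewrite add0n.
- apply/andP; split; lia.
move=> s0 [ss [E Hn]].
exists ((m %/ 2 ^ d.+1).+1, 1%N), (s0 :: ss); split => //.
move=> s; rewrite inE => /orP [/eqP ->|Hs]; first by apply: nonneg.
by apply: Hn.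
Qed.


Close Scope ring_scope.

Theorem theorem3p4 (m k : nat) :
  exists (s0 : nat * nat) (ss : seq (nat * nat)),
    game_eq (tower_aux s0 ss) (dyadic_game m k) /\
    (forall s, s \in s0 :: ss -> game_le game0 (story s)).
Proof. exact: main_P. Qed.
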